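(* Let $\mathbb{K}$ be a field, $k\ge1$, and let $\mathcal{C}\subseteq\mathbb{K}^{2k}$ be a self-dual code with generator matrix $G\in\mathbb{K}^{k\times 2k}$ having no two proportional columns, so that $\Pi_G$ consists of $2k$ distinct points of $\mathbb{P}^{k-1}(\overline{\mathbb{K}})$. Then $\Pi_G$ fails by exactly $\mathrm{nb}(\mathcal{C})$ to impose independent conditions on quadrics; equivalently, $$\mathrm{gd}(\Pi_G)=2k-\dim_{\mathbb{K}}(\mathcal{C}^{(2)})-1=\mathrm{nb}(\mathcal{C})-1.$$
   Context: A linear code of length $n$ over $\mathbb{K}$ is a $\mathbb{K}$-subspace $\mathcal{C}\subseteq\mathbb{K}^n$; self-dual means $\mathcal{C}=\mathcal{C}^\perp$ for the standard bilinear form. $\overline{\mathbb{K}}$ is an algebraic closure of $\mathbb{K}$. For a generator matrix $G$ of $\mathcal{C}$, $\Pi_G\subseteq\mathbb{P}^{k-1}(\overline{\mathbb{K}})$ is the set of points represented by the columns of $G$. The Schur square $\mathcal{C}^{(2)}$ is the span of all componentwise products $c\ast c'=(c_1c'_1,\dots,c_nc'_n)$, $c,c'\in\mathcal{C}$. A set of $N$ points in $\mathbb{P}^{k-1}(\overline{\mathbb{K}})$ fails by $m$ to impose independent conditions on quadrics if the space of quadratic forms in $\overline{\mathbb{K}}[x_1,\dots,x_k]_2$ vanishing on it has dimension $\binom{k+1}{2}-(N-m)$. For $2k$ points failing by $m$, the Gorenstein defect is $\mathrm{gd}=m-1$. Codes are equivalent if they differ by a coordinate permutation; a code is decomposable if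 equivalent to a direct sum $\{(c_1,c_2):c_i\in\mathcal{C}_i\}$ of two nontrivial codes, indecomposable otherwise; $\mathrm{nb}(\mathcal{C})$ is the number of indecomposable blocks in a decomposition of $\mathcal{C}$ into a direct sum of indecomposable codes (an invariant of $\mathcal{C}$). *)

(* Defs.v *)
From HB Require Import structures.
From mathcomp Require Import all_boot all_order all_algebra.
Set Implicit Arguments. Unset Strict Implicit. Unset Printing Implicit Defensive.
Import Order.TTheory GRing.Theory Num.Theory.
Local Open Scope ring_scope.

(* A linear code C of length n over K is represented by a matrix G whose
   row space is C; codewords are row vectors c with (c <= G)%MS. *)

Definition schur_prod (K : fieldType) n (c d : 'rV[K]_n) : 'rV[K]_n :=
  \row_j (c 0 j * d 0 j).

Definition is_schur_square (K : fieldType) k n (G : 'M[K]_(k, n)) (S : 'M[K]_n) :=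
  (forall c d : 'rV[K]_n, (c <= G)%MS -> (d <= G)%MS -> (schur_prod c d <= S)%MS) /\
  (forall m (T : 'M[K]_(m, n)),
     (forall c d : 'rV[K]_n, (c <= G)%MS -> (d <= G)%MS -> (schur_prod c d <= T)%MS) ->
     (S <= T)%MS).

Definition dual_code (K : fieldType) k n (G : 'M[K]_(k, n)) : 'M[K]_n := kermx G^T.

Definition self_dual (K : fieldType) k n (G : 'M[K]_(k, n)) : bool :=
  (G == dual_code G)%MS.

Definition proportional_cols (K : fieldType) k n (G : 'M[K]_(k, n)) (i j : 'I_n) : bool :=
  (\rank (row_mx (col i G) (col j G)) <= 1)%N.

Definition supp_in (K : fieldType) n (A : {set 'I_n}) (c : 'rV[K]_n) : Prop :=
  forall j, j \notin A -> c 0 j = 0.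

(* The subcode C_B = C /\ V_B (codewords supported in B), viewed as a code on the
   coordinates of B, is a direct sum of the codes on A and on B \ A. *)
Definition splits_within (K : fieldType) k n (G : 'M[K]_(k, n)) (B A : {set 'I_n}) : Prop :=
  forall c : 'rV[K]_n, (c <= G)%MS -> supp_in B c ->
    exists c1 c2 : 'rV[K]_n,
      [/\ (c1 <= G)%MS, (c2 <= G)%MS, supp_in A c1, supp_in (B :\: A) c2 & c = c1 + c2].

Definition indecomposable_block (K : fieldType) k n (G : 'M[K]_(k, n)) (B : {set 'I_n}) : Prop :=
  ~ exists A : {set 'I_n}, [/\ A != set0, A \proper B & splits_within G B A].

Definition indecomp_decomposition (K : fieldType) k n (G : 'M[K]_(k, n))
    (P : {set {set 'I_n}}) : Prop :=
  [/\ partition P [set: 'I_n],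
      (forall c : 'rV[K]_n, (c <= G)%MS ->
         exists f : {set 'I_n} -> 'rV[K]_n,
           (forall B, B \in P -> (f B <= G)%MS /\ supp_in B (f B)) /\
           c = \sum_(B in P) f B)
    & (forall B, B \in P -> indecomposable_block G B)].

(* Monomials x_a x_b (a <= b) of degree 2 in k variables. *)
Definition mono (k : nat) := {p : 'I_k * 'I_k | (p.1 <= p.2)%N}.

(* Evaluation matrix: row m = monomial, column j = point (column j of P).
   A quadratic form is a coefficient row vector q in 'rV_#|mono k|;
   it vanishes at all points iff q *m quad_eval_mx P = 0. *)
Definition quad_eval_mx (L : fieldType) k N (P : 'M[L]_(k, N)) : 'M[L]_(#|{: mono k}|, N) :=
  \matrix_(m, j) (let p := val (enum_val m) in P p.1 j * P p.2 j).

Definition vanishing_quadrics (L : fieldType) k N (P : 'M[L]_(k, N)) :=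
  kermx (quad_eval_mx P).

Definition fails_by (L : fieldType) k N (P : 'M[L]_(k, N)) (m : nat) : Prop :=
  (\rank (vanishing_quadrics P))%:Z = ('C(k.+1, 2))%:Z - (N%:Z - m%:Z).

(* Main.v *)
Require Import Defs.
From HB Require Import structures.
From mathcomp Require Import all_boot all_order all_algebra.
From mathcomp Require Import zify.
Import GRing.Theory Num.Theory.
Local Open Scope ring_scope.
Set Implicit Arguments. Unset Strict Implicit.

Lemma sd_sub (K : fieldType) k n (G : 'M[K]_(k,n)) m (M : 'M[K]_(m,n)) :
  self_dual G -> (M <= G)%MS = (M *m G^T == 0).
Proof.
rewrite /self_dual /dual_code => /andP[H1 H2].
rewrite -sub_kermx; apply/idP/idP => H; [exact: submx_trans H H1|exact: submx_trans H H2].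
Qed.

Lemma schurE (K : fieldType) n (c x : 'rV[K]_n) : c *m diag_mx x = schur_prod c x.
Proof. by apply/rowP => j; rewrite mul_mx_diag !mxE. Qed.

Definition Stab (K : fieldType) k n (G : 'M[K]_(k,n)) (x : 'rV[K]_n) :=
  forall c, (c <= G)%MS -> (schur_prod c x <= G)%MS.

Lemma StabP (K : fieldType) k n (G : 'M[K]_(k,n)) x :
  Stab G x <-> (G *m diag_mx x <= G)%MS.
Proof.
split => [H|H c /submxP[u ->]].
  apply/row_subP => i; rewrite row_mul schurE; apply: H; exact: row_sub.
by rewrite -schurE -mulmxA; apply: submx_trans H; apply: submxMl.
Qed.

Lemma Stab_add (K : fieldType) k n (G : 'M[K]_(k,n)) x y :
  Stab G x -> Stab G y -> Stab G (x + y).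
Proof.
move=> Hx Hy c Hc.
have -> : schur_prod c (x + y) = schur_prod c x + schur_prod c y.
  by apply/rowP => j; rewrite !mxE mulrDr.
by rewrite addmx_sub ?Hx ?Hy.
Qed.

Lemma Stab_scale (K : fieldType) k n (G : 'M[K]_(k,n)) a x :
  Stab G x -> Stab G (a *: x).
Proof.
move=> Hx c Hc.
have -> : schur_prod c (a *: x) = a *: schur_prod c x.
  by apply/rowP => j; rewrite !mxE mulrCA.
by rewrite scalemx_sub ?Hx.
Qed.

Lemma Stab_one (K : fieldType) k n (G : 'M[K]_(k,n)) :
  Stab G (const_mx 1).
Proof.
move=> c Hc.
have -> : schur_prod c (const_mx 1) = c by apply/rowP => j; rewrite !mxE mulr1.
done.
Qed.

Lemma Stab_mul (K : fieldType) k n (G : 'M[K]_(k,n)) x y :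
  Stab G x -> Stab G y -> Stab G (schur_prod x y).
Proof.
move=> Hx Hy c Hc.
have -> : schur_prod c (schur_prod x y) = schur_prod (schur_prod c x) y.
  by apply/rowP => j; rewrite !mxE mulrA.
by apply: Hy; apply: Hx.
Qed.

Lemma Stab_prod (K : fieldType) k n (G : 'M[K]_(k,n)) (s : seq 'I_n) (F : 'I_n -> 'rV[K]_n) :
  (forall j, Stab G (F j)) -> Stab G (\row_i \prod_(j <- s) F j 0 i).
Proof.
move=> HF; elim: s => [|a s IH].
  have -> : (\row_i \prod_(j <- [::]) F j 0 i) = const_mx 1 :> 'rV[K]_n.
    by apply/rowP => i; rewrite !mxE big_nil.
  exact: Stab_one.
have -> : (\row_i \prod_(j <- a :: s) F j 0 i) = schur_prod (F a) (\row_i \prod_(j <- s) F j 0 i).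
  by apply/rowP => i; rewrite !mxE big_cons.
exact: Stab_mul.
Qed.

Definition indic (K : fieldType) n (A : {set 'I_n}) : 'rV[K]_n := \row_j (j \in A)%:R.

Lemma Stab_level (K : fieldType) k n (G : 'M[K]_(k,n)) x l :
  Stab G x -> Stab G (\row_i (x 0 i == l)%:R).
Proof.
move=> Hx.
pose F j : 'rV[K]_n := \row_i (if x 0 j != l then (x 0 i - x 0 j) / (l - x 0 j) else 1).
have HF j : Stab G (F j).
  rewrite /F; case Hj: (x 0 j != l).
    have -> : (\row_i ((x 0 i - x 0 j) / (l - x 0 j))) = (l - x 0 j)^-1 *: (x + (- x 0 j) *: const_mx 1).
      by apply/rowP => i; rewrite !mxE mulr1 mulrC.
    by apply: Stab_scale; apply: Stab_add => //; apply: Stab_scale; apply: Stab_one.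
  have -> : (\row_i (1 : K)) = const_mx 1 :> 'rV[K]_n by apply/rowP => i; rewrite !mxE.
  exact: Stab_one.
have -> : (\row_i (x 0 i == l)%:R) = \row_i \prod_(j <- index_enum 'I_n) F j 0 i.
  apply/rowP => i; rewrite !mxE.
  case: eqP => Hi.
    rewrite big1 // => j _; rewrite mxE; case: ifP => // Hj.
    by rewrite Hi divff // subr_eq0 eq_sym.
  rewrite (bigD1_seq i (mem_index_enum i) (index_enum_uniq _)) /= mxE.
  by move/eqP: Hi => Hi; rewrite Hi subrr mul0r mul0r.
exact: Stab_prod.
Qed.


Lemma GdG_entry (K : fieldType) k n (G : 'M[K]_(k,n)) (x : 'rV[K]_n) (a b : 'I_k) :
  (G *m diag_mx x *m G^T) a b = \sum_j x 0 j * (G a j * G b j).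
Proof.
rewrite mul_mx_diag !mxE; apply: eq_bigr => j _; rewrite !mxE.
by rewrite (mulrC (G a j)) -mulrA.
Qed.

Lemma xQ_entry (K : fieldType) k n (G : 'M[K]_(k,n)) (x : 'rV[K]_n) m :
  (x *m (quad_eval_mx G)^T) 0 m =
  \sum_j x 0 j * (G (val (enum_val m)).1 j * G (val (enum_val m)).2 j).
Proof. by rewrite !mxE; apply: eq_bigr => j _; rewrite !mxE. Qed.

Lemma Stab_ker (K : fieldType) k n (G : 'M[K]_(k,n)) (x : 'rV[K]_n) :
  self_dual G -> Stab G x <-> (x <= kermx (quad_eval_mx G)^T)%MS.
Proof.
move=> sd; apply: (iff_trans (StabP _ _)); rewrite sd_sub // sub_kermx.
split => /eqP H; apply/eqP.
  apply/rowP => m; rewrite xQ_entry -GdG_entry H !mxE //.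
apply/matrixP => a b.
have key : forall a b : 'I_k, (a <= b)%N -> (G *m diag_mx x *m G^T) a b = 0.
  move=> a' b' h.
  move/rowP: H => /(_ (enum_rank (exist _ (a', b') h : mono k))).
  by rewrite xQ_entry enum_rankK /= GdG_entry !mxE.
case: (leqP a b) => h; first by rewrite key // mxE.
rewrite [RHS]mxE; transitivity ((G *m diag_mx x *m G^T) b a); last by apply: key; exact: ltnW.
rewrite !GdG_entry; apply: eq_bigr => j _; by rewrite [G a j * _]mulrC.
Qed.


Lemma schurC (K : fieldType) n (c d : 'rV[K]_n) : schur_prod c d = schur_prod d c.
Proof. by apply/rowP => j; rewrite !mxE mulrC. Qed.

Lemma rowQ (K : fieldType) k n (G : 'M[K]_(k,n)) (a b : 'I_k) :
  (schur_prod (row a G) (row b G) <= quad_eval_mx G)%MS.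
Proof.
wlog h : a b / (a <= b)%N.
  move=> W; case: (leqP a b) => h; first exact: W.
  by rewrite schurC; apply: W; apply: ltnW.
have -> : schur_prod (row a G) (row b G) =
   row (enum_rank (exist _ (a, b) h : mono k)) (quad_eval_mx G).
  by apply/rowP => j; rewrite !mxE enum_rankK.
exact: row_sub.
Qed.

Lemma schur_sub_Q (K : fieldType) k n (G : 'M[K]_(k,n)) c d :
  (c <= G)%MS -> (d <= G)%MS -> (schur_prod c d <= quad_eval_mx G)%MS.
Proof.
move=> /submxP[u ->] /submxP[v ->].
have -> : schur_prod (u *m G) (v *m G) =
  \sum_a \sum_b (u 0 a * v 0 b) *: schur_prod (row a G) (row b G).
  apply/rowP => j; rewrite !mxE summxE big_distrl /=; apply: eq_bigr => a _.
  rewrite summxE big_distrr /=; apply: eq_bigr => b _.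
  by rewrite !mxE mulrACA.
apply: summx_sub => a _; apply: summx_sub => b _; apply: scalemx_sub.
exact: rowQ.
Qed.

Lemma schur_square_rank (K : fieldType) k n (G : 'M[K]_(k,n)) S :
  is_schur_square G S -> \rank S = \rank (quad_eval_mx G).
Proof.
case=> H1 H2; apply/eqmx_rank/andP; split.
  apply: H2 => c d; exact: schur_sub_Q.
apply/row_subP => m.
have -> : row m (quad_eval_mx G) =
  schur_prod (row (val (enum_val m)).1 G) (row (val (enum_val m)).2 G).
  by apply/rowP => j; rewrite !mxE.
by apply: H1; apply: row_sub.
Qed.

Local Close Scope ring_scope.

Lemma inner_count k (b : 'I_k) : \sum_(a < k) (if (a <= b)%N then 1 else 0) = b.+1.
Proof.
rewrite -(big_mkord xpredT (fun a => if (a <= b)%N then 1 else 0)).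
rewrite (big_cat_nat _ (n:=b.+1)) //=.
rewrite [X in (_ + X)%N]big1_seq ?addn0; last first.
  move=> i /andP[_]; rewrite mem_index_iota => /andP[h _]; by rewrite leqNgt h.
rewrite big_nat_cond (eq_bigr (fun _ => 1)); last first.
  by move=> i /andP[/andP[_ h] _]; rewrite -ltnS h.
by rewrite -big_nat_cond sum_nat_const_nat muln1 subn0.
Qed.

Lemma card_mono k : #|{: mono k}| = 'C(k.+1, 2).
Proof.
rewrite card_sig -sum1_card big_mkcond /=.
rewrite -(pair_big xpredT xpredT (fun a b : 'I_k => if (a <= b)%N then 1 else 0)) /=.
rewrite exchange_big /= (eq_bigr (fun b : 'I_k => b.+1)); last by move=> b _; exact: inner_count.
rewrite -bin2_sum big_mkord big_ord_recl /=.
by apply: eq_bigr => i _.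
Qed.

Local Open Scope ring_scope.

Lemma triv_notin n (P : {set {set 'I_n}}) B B' j :
  trivIset P -> B \in P -> B' \in P -> B' != B -> j \in B -> j \notin B'.
Proof.
move=> /trivIsetP tP hB hB' ne hj.
by rewrite (disjointFl (tP _ _ hB' hB ne) hj).
Qed.

Lemma cover_in n (P : {set {set 'I_n}}) t :
  partition P [set: 'I_n] -> exists2 B, B \in P & t \in B.
Proof.
case/and3P => /eqP cP _ _.
have : t \in cover P by rewrite cP inE.
by case/bigcupP => B hB ht; exists B.
Qed.

Lemma indic_Stab (K : fieldType) k n (G : 'M[K]_(k,n)) P B :
  indecomp_decomposition G P -> B \in P -> Stab G (indic K B).
Proof.
case=> pP dec _ hB c /dec[f [Hf ->]].
have tP : trivIset P by case/and3P: pP.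
suff -> : schur_prod (\sum_(B0 in P) f B0) (indic K B) = f B by case: (Hf B hB).
apply/rowP => j; rewrite !mxE summxE.
case: (boolP (j \in B)) => hj.
  rewrite mulr1 (bigD1 B) //= big1 ?addr0 // => B' /andP[hB' ne].
  by case: (Hf B' hB') => _; apply; apply: (triv_notin tP hB hB' ne hj).
by rewrite mulr0; case: (Hf B hB) => _ /(_ j hj) ->.
Qed.

Lemma const_on_block (K : fieldType) k n (G : 'M[K]_(k,n)) P B x i j :
  indecomp_decomposition G P -> B \in P -> Stab G x -> i \in B -> j \in B ->
  x 0 i = x 0 j.
Proof.
move=> [pP dec ind] hB Hx hi hj.
case: (eqVneq (x 0 i) (x 0 j)) => // ne; exfalso.
apply: (ind B hB).
pose l := x 0 i.
pose e : 'rV[K]_n := \row_t (x 0 t == l)%:R.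
have He : Stab G e by apply: Stab_level.
exists [set t in B | x 0 t == l]; split.
- by apply/set0Pn; exists i; rewrite inE hi eqxx.
- apply/properP; split; first by apply/subsetP => t; rewrite inE => /andP[].
  by exists j => //; rewrite inE hj /= eq_sym.
- move=> c Hc sc; exists (schur_prod c e), (c - schur_prod c e); split.
  + exact: He.
  + by rewrite addmx_sub // eqmx_opp He.
  + move=> t; rewrite inE negb_and => /orP[ht|ht]; rewrite !mxE.
      by rewrite sc // mul0r.
    by rewrite (negbTE ht) mulr0.
  + move=> t; rewrite !inE negb_and negbK => /orP[/andP[ht hl] | ht]; rewrite !mxE.
      by rewrite hl mulr1 subrr.
    by rewrite sc // mul0r subrr.
  + by rewrite addrC subrK.
Qed.


Definition Emx (K : fieldType) n (P : {set {set 'I_n}}) : 'M[K]_(#|P|, n) :=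
  \matrix_(i < #|P|) indic K (enum_val i).

Lemma Emx_mul (K : fieldType) n (P : {set {set 'I_n}}) (w : 'rV[K]_#|P|) (t : 'I_n) (i0 : 'I_#|P|) :
  trivIset P -> t \in enum_val i0 -> (w *m Emx K P) 0 t = w 0 i0.
Proof.
move=> tP ht; rewrite !mxE (bigD1 i0) //= !mxE ht mulr1 big1 ?addr0 // => i ne.
rewrite !mxE.
have ne' : enum_val i != enum_val i0 :> {set 'I_n}.
  by apply: contra ne => /eqP /enum_val_inj ->.
by rewrite (negbTE (triv_notin tP (enum_valP i0) (enum_valP i) ne' ht)) mulr0.
Qed.

Lemma exists_idx n (P : {set {set 'I_n}}) t :
  partition P [set: 'I_n] -> exists i0 : 'I_#|P|, t \in enum_val i0.
Proof.
move=> pP; case: (cover_in t pP) => B hB ht.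
by exists (enum_rank_in hB B); rewrite enum_rankK_in.
Qed.

Definition rep n (t0 : 'I_n) (B : {set 'I_n}) := odflt t0 [pick t in B].

Lemma repP n (t0 : 'I_n) B : B != set0 -> rep t0 B \in B.
Proof.
case/set0Pn => t ht; rewrite /rep; case: pickP => [y -> //|H].
by have := H t; rewrite ht.
Qed.

Lemma rank_Emx (K : fieldType) n (P : {set {set 'I_n}}) :
  partition P [set: 'I_n] -> \rank (Emx K P) = #|P|.
Proof.
move=> pP; have tP : trivIset P by case/and3P: pP.
have n0 : set0 \notin P by case/and3P: pP.
have inj (w : 'rV[K]_#|P|) : w *m Emx K P = 0 -> w = 0.
  move=> H; apply/rowP => i.
  have : enum_val i != set0.
    by apply: contraNneq n0 => <-; exact: enum_valP.
  case/set0Pn => t ht.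
  by rewrite -(Emx_mul w tP ht) H !mxE.
suff : row_free (Emx K P) by move/eqP.
rewrite -kermx_eq0; apply/eqP/row_matrixP => r.
by rewrite row0; apply: inj; rewrite -row_mul mulmx_ker row0.
Qed.

Lemma rank_stab (K : fieldType) k n (G : 'M[K]_(k,n)) P (t0 : 'I_n) :
  self_dual G -> indecomp_decomposition G P ->
  \rank (kermx (quad_eval_mx G)^T) = #|P|.
Proof.
move=> sd dec.
have pP : partition P [set: 'I_n] by case: dec.
have tP : trivIset P by case/and3P: pP.
have n0 : set0 \notin P by case/and3P: pP.
rewrite -(rank_Emx K pP); apply/eqmx_rank/andP; split.
  apply/row_subP => r.
  set x := row r _.
  have Hx : Stab G x by apply/(Stab_ker _ sd); exact: row_sub.
  pose w : 'rV[K]_#|P| := \row_i x 0 (rep t0 (enum_val i)).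
  suff -> : x = w *m Emx K P by apply: submxMl.
  apply/rowP => t; case: (exists_idx t pP) => i0 ht.
  rewrite (Emx_mul w tP ht) [w 0 i0]mxE.
  apply: (const_on_block dec (enum_valP i0) Hx ht).
  apply: repP; by apply: contraNneq n0 => <-; exact: enum_valP.
apply/row_subP => i.
have -> : row i (Emx K P) = indic K (enum_val i) by apply/rowP => j; rewrite !mxE.
apply/(Stab_ker _ sd); exact: (indic_Stab dec (enum_valP i)).
Qed.


Definition Amx (K : fieldType) k n (G : 'M[K]_(k,n)) : 'M[K]_n := kermx (quad_eval_mx G)^T.

Definition arel (K : fieldType) k n (G : 'M[K]_(k,n)) : rel 'I_n :=
  fun i j => [forall r, Amx G r i == Amx G r j].

Definition cls (K : fieldType) k n (G : 'M[K]_(k,n)) (i : 'I_n) : {set 'I_n} :=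
  [set y in [set: 'I_n] | arel G i y].

Lemma cls_Stab (K : fieldType) k n (G : 'M[K]_(k,n)) i :
  self_dual G -> Stab G (indic K (cls G i)).
Proof.
move=> sd.
pose F r : 'rV[K]_n := \row_j ((row r (Amx G)) 0 j == Amx G r i)%:R.
have HF r : Stab G (F r).
  apply: Stab_level; apply/(Stab_ker _ sd); exact: row_sub.
suff -> : indic K (cls G i) = \row_j \prod_(r <- index_enum 'I_n) F r 0 j.
  exact: Stab_prod.
apply/rowP => j.
have Fe r : F r 0 j = (Amx G r j == Amx G r i)%:R.
  by rewrite /F mxE [row _ _ _ _]mxE.
rewrite [LHS]mxE [RHS]mxE !inE /arel.
case: (boolP [forall r, Amx G r i == Amx G r j]) => H.
  rewrite /= big1 // => r _; rewrite Fe.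
  by move/forallP: H => /(_ r) /eqP ->; rewrite eqxx.
case/forallPn: H => r hr.
rewrite /= (bigD1_seq r (mem_index_enum r) (index_enum_uniq _)) /= Fe.
by rewrite eq_sym (negbTE hr) mul0r.
Qed.

Lemma arel_sym_eq (K : fieldType) k n (G : 'M[K]_(k,n)) i j j' :
  arel G i j -> arel G i j' -> forall r, Amx G r j = Amx G r j'.
Proof.
by move=> /forallP H1 /forallP H2 r; rewrite -(eqP (H1 r)) (eqP (H2 r)).
Qed.

Lemma exists_decomp (K : fieldType) k n (G : 'M[K]_(k,n)) :
  self_dual G -> exists P, indecomp_decomposition G P.
Proof.
move=> sd.
have eqR : {in [set: 'I_n] & &, equivalence_rel (arel G)}.
  move=> x y z _ _ _; split; first by apply/forallP => r.
  move=> /forallP Hxy; apply/forallP/forallP => H r.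
    by rewrite -(eqP (Hxy r)) (eqP (H r)).
  by rewrite (eqP (Hxy r)) (eqP (H r)).
have pP := equivalence_partitionP eqR.
exists (equivalence_partition (arel G) [set: 'I_n]).
have tP : trivIset (equivalence_partition (arel G) [set: 'I_n]) by case/and3P: pP.
have inP B : B \in equivalence_partition (arel G) [set: 'I_n] -> exists i, B = cls G i.
  by case/imsetP => i _ ->; exists i.
split => //.
  move=> c Hc; exists (fun B => schur_prod c (indic K B)); split.
    move=> B /inP [i ->]; split; first exact: cls_Stab.
    by move=> j hj; rewrite !mxE (negbTE hj) mulr0.
  apply/rowP => t; rewrite summxE.
  case: (cover_in t pP) => B0 hB0 ht.
  rewrite (bigD1 B0) //= big1 ?addr0; first by rewrite !mxE ht mulr1.
  move=> B /andP[hB ne]; rewrite !mxE.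
  by rewrite (negbTE (triv_notin tP hB0 hB ne ht)) mulr0.
move=> B /inP [i ->] [A' [nA' prA' spl]].
have HA' : Stab G (indic K A').
  move=> c Hc.
  have Hc' : (schur_prod c (indic K (cls G i)) <= G)%MS by apply: cls_Stab.
  have sc' : supp_in (cls G i) (schur_prod c (indic K (cls G i))).
    by move=> j hj; rewrite !mxE (negbTE hj) mulr0.
  case: (spl _ Hc' sc') => c1 [c2 [Hc1 Hc2 s1 s2 e]].
  suff -> : schur_prod c (indic K A') = c1 by [].
  case/properP: prA' => /subsetP sub _.
  apply/rowP => t; case: (boolP (t \in A')) => ht.
    have := congr1 (fun v : 'rV[K]_n => v 0 t) e; rewrite !mxE ht (sub _ ht) /= !mulr1 => ->.
    by rewrite [c2 0 t]s2 ?addr0 // inE ht.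
  by rewrite !mxE (negbTE ht) mulr0 s1.
have : (indic K A' <= Amx G)%MS by apply/(Stab_ker _ sd).
case/submxP => w Hw.
case/set0Pn: nA' => j hj.
case/properP: prA' => /subsetP sub [j' hj' nj'].
have r1 : arel G i j by move: (sub _ hj); rewrite !inE.
have r2 : arel G i j' by move: hj'; rewrite !inE.
have E1 := congr1 (fun v : 'rV[K]_n => v 0 j) Hw.
have E0 := congr1 (fun v : 'rV[K]_n => v 0 j') Hw.
rewrite /= [indic _ _ _ _]mxE hj [(w *m _) _ _]mxE in E1.
rewrite /= [indic _ _ _ _]mxE (negbTE nj') [(w *m _) _ _]mxE in E0.
have : (true%:R : K) = false%:R.
  rewrite E1 E0; apply: eq_bigr => r _; by rewrite (arel_sym_eq r1 r2).
by rewrite /= mulr1n mulr0n => /eqP; rewrite oner_eq0.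
Qed.

Unset Implicit Arguments.
Theorem mainTheorem3 (K : fieldType) (L : closedFieldType) (iota : {rmorphism K -> L})
    (k : nat) (G : 'M[K]_(k, 2 * k)) :
  (1 <= k)%N ->
  row_free G ->
  self_dual G ->
  (forall i j : 'I_(2 * k), i != j -> ~~ proportional_cols G i j) ->
  (exists P, indecomp_decomposition G P) /\
  (forall P : {set {set 'I_(2 * k)}}, indecomp_decomposition G P ->
     fails_by (map_mx iota G) #|P| /\
     (forall S : 'M[K]_(2 * k), is_schur_square G S ->
        (2 * k)%:Z - (\rank S)%:Z - 1 = #|P|%:Z - 1)).
Proof.
move=> k1 _ sd _.
split; first exact: exists_decomp.
move=> P dec.
have h0 : (0 < 2 * k)%N by rewrite muln_gt0.
have hr := rank_stab (Ordinal h0) sd dec.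
rewrite mxrank_ker mxrank_tr in hr.
have hQ := rank_leq_col (quad_eval_mx G).
have hQ2 := rank_leq_row (quad_eval_mx G).
have hc := card_mono k.
split.
  rewrite /fails_by /vanishing_quadrics.
  have -> : quad_eval_mx (map_mx iota G) = map_mx iota (quad_eval_mx G).
    by apply/matrixP => a b; rewrite !mxE /= !mxE rmorphM.
  rewrite mxrank_ker mxrank_map.
  lia.
move=> S sq; rewrite (schur_square_rank sq).
lia.
Qed.
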